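(* Let $Y$ be a rank-two $\mathbb{Q}$-graded matrix factorisation of $x^3 + y^4 - u^{12} - v^2$. Suppose that (i) $Y$ has non-zero (left and right) quantum dimensions and (ii) when setting $u$ to zero, $Y$ is equal to $X_0 = (R^2\oplus R^2, d_{X_0})$ with $$d_{X_0}^1 = \begin{pmatrix} y^2-v & -x \\ x^2 & y^2+v \end{pmatrix}, \qquad d_{X_0}^0 = (d_{X_0}^1)^\# .$$ Then $Y$ is isomorphic in $\operatorname{hmf}^{\mathrm{gr}}(\mathbb{C}[u,v,x,y],\,x^3 + y^4 - u^{12} - v^2)$ to $X_u = (R^2\oplus R^2, d_{X_u})$ with $d_{X_u}^0 = (d_{X_u}^1)^\#$ and $d_{X_u}^1 = \begin{pmatrix} a&b\\ c&d\end{pmatrix}$, where $$a = y^2-v + \tfrac12 x (s u)^2 + \tfrac{2t+1}{8} (s u)^6,\qquad b = -x + y (s u) + \tfrac{t+1}{4} (s u)^4,$$ $$c = x^2 + y x (s u) + \tfrac{t}{4} x (su)^4 + \tfrac{2t+1}{4} y (su)^5 - \tfrac{9t+5}{48} (su)^8,\qquad d = y^2+v + \tfrac12 x (s u)^2 + \tfrac{2t+1}{8} (s u)^6,$$ for some solution $s,t\in\mathbb{C}$ of $t^2 = \tfrac13$, $s^{12} = -576\,(26\,t - 15)$.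
   Context: Work over $\mathbb{C}$ with $R=\mathbb{C}[u,v,x,y]$ graded by $|u|=1/6$, $|v|=1$, $|y|=1/2$, $|x|=2/3$, so that $W(x,y)=x^3+y^4$ (the $E_6$ potential) and $V(u,v)=u^{12}+v^2$ (the $A_{11}$ potential) both have degree 2. A matrix factorisation of $W-V$ on $R^2\oplus R^2$ has twisted differential $d=\begin{pmatrix}0&d^1\\ d^0&0\end{pmatrix}$ with $d\circ d=(W-V)\cdot 1$; it is $\mathbb{Q}$-graded if the module is $\mathbb{Q}$-graded compatibly with $R$ and $d$ has degree 1. $M^\#$ denotes the adjunct (adjugate) matrix. The left and right quantum dimensions of a finite-rank matrix factorisation $X$ of $W(y_1,\dots,y_n)-V(x_1,\dots,x_m)$ are $\dim_l(X) = (-1)^{\binom{m+1}{2}}\mathrm{Res}\big[\mathrm{str}(\partial_{x_1}d_X\cdots\partial_{x_m}d_X\,\partial_{y_1}d_X\cdots\partial_{y_n}d_X)\,dy/(\partial_{y_1}W,\dots,\partial_{y_n}W)\big]$ and $\dim_r(X) = (-1)^{\binom{n+1}{2}}\mathrm{Res}\big[\mathrm{str}(\partial_{x_1}d_X\cdots\partial_{x_m}d_X\,\partial_{y_1}d_X\cdots\partial_{y_n}d_X)\,dx/(\partial_{x_1}V,\dots,\partial_{x_m}V)\big]$, here with variables $(u,v)$ for $V$ and $(x,y)$ for $W$. $\operatorname{hmf}^{\mathrm{gr}}$ is the homotopy category of graded matrix factorisations (homotopy equivalent to finite rank). *)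

(* Defs.v *)
From HB Require Import structures.
From mathcomp Require Import all_boot all_order all_algebra.
From mathcomp Require Import reals.
From mathcomp Require Import complex.
From mathcomp.multinomials Require Import mpoly.

Set Implicit Arguments.
Unset Strict Implicit.
Unset Printing Implicit Defensive.

Import Order.TTheory GRing.Theory Num.Theory.
Local Open Scope ring_scope.

Section MF.
Variable C : fieldType.

Notation Rg := {mpoly C[4]}.

Definition iu : 'I_4 := inord 0.
Definition iv : 'I_4 := inord 1.
Definition ix : 'I_4 := inord 2.
Definition iy : 'I_4 := inord 3.

Definition pu : Rg := 'X_iu.
Definition pv : Rg := 'X_iv.
Definition px : Rg := 'X_ix.
Definition py : Rg := 'X_iy.

Definition weight (i : 'I_4) : rat :=
  if i == iu then 1 / 6%:R
  else if i == iv then 1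
  else if i == ix then 2%:R / 3%:R
  else 1 / 2%:R.

Definition wdeg (m : 'X_{1..4}) : rat := \sum_(i < 4) (m i)%:R * weight i.

(* p is homogeneous of degree q (the zero polynomial is homogeneous of every degree) *)
Definition whomog (q : rat) (p : Rg) : Prop :=
  forall m, m \in msupp p -> wdeg m = q.

Definition Wpot : Rg := px ^+ 3 + py ^+ 4.
Definition Vpot : Rg := pu ^+ 12 + pv ^+ 2.

(* A rank-two matrix factorisation on R^2 (+) R^2 is given by
   d^0 : X^0 -> X^1 and d^1 : X^1 -> X^0, the twisted differential being
   d = [[0, d^1], [d^0, 0]] acting on X^0 (+) X^1 (column vectors). *)
Definition twdiff (d0 d1 : 'M[Rg]_2) : 'M[Rg]_(2 + 2) := block_mx 0 d1 d0 0.

Definition is_mf (P : Rg) (d0 d1 : 'M[Rg]_2) : Prop :=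
  twdiff d0 d1 *m twdiff d0 d1 = P%:M.

(* A map f : M -> N between free graded modules with bases of degrees qM, qN
   is homogeneous of degree k when each entry f i j is homogeneous of degree
   k + qN i - qM j. *)
Definition mx_homog (k : rat) (qN qM : 'I_(2 + 2) -> rat)
  (f : 'M[Rg]_(2 + 2)) : Prop :=
  forall i j, whomog (k + qN i - qM j) (f i j).

Definition graded_mf (q : 'I_(2 + 2) -> rat) (d0 d1 : 'M[Rg]_2) : Prop :=
  mx_homog 1 q q (twdiff d0 d1).

Definition even_mx (f : 'M[Rg]_(2 + 2)) : Prop :=
  ursubmx f = 0 /\ dlsubmx f = 0.
Definition odd_mx (f : 'M[Rg]_(2 + 2)) : Prop :=
  ulsubmx f = 0 /\ drsubmx f = 0.

Definition gr_morph (qM : 'I_(2+2) -> rat) (dM : 'M[Rg]_(2+2))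
  (qN : 'I_(2+2) -> rat) (dN : 'M[Rg]_(2+2)) (f : 'M[Rg]_(2+2)) : Prop :=
  even_mx f /\ mx_homog 0 qN qM f /\ dN *m f = f *m dM.

Definition gr_homotopic (qM : 'I_(2+2) -> rat) (dM : 'M[Rg]_(2+2))
  (qN : 'I_(2+2) -> rat) (dN : 'M[Rg]_(2+2)) (f g : 'M[Rg]_(2+2)) : Prop :=
  exists h : 'M[Rg]_(2+2),
    odd_mx h /\ mx_homog (-1) qN qM h /\ f - g = dN *m h + h *m dM.

Definition hmf_gr_iso (qM : 'I_(2+2) -> rat) (dM : 'M[Rg]_(2+2))
  (qN : 'I_(2+2) -> rat) (dN : 'M[Rg]_(2+2)) : Prop :=
  exists (f g : 'M[Rg]_(2+2)),
    gr_morph qM dM qN dN f /\ gr_morph qN dN qM dM g /\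
    gr_homotopic qM dM qM dM (g *m f) 1%:M /\
    gr_homotopic qN dN qN dN (f *m g) 1%:M.

Definition supertr (f : 'M[Rg]_(2 + 2)) : Rg := \tr (ulsubmx f) - \tr (drsubmx f).

Definition dmx (i : 'I_4) (f : 'M[Rg]_(2 + 2)) : 'M[Rg]_(2 + 2) :=
  map_mx (mderiv i) f.

Definition qdim_integrand (D : 'M[Rg]_(2 + 2)) : Rg :=
  supertr (dmx iu D *m dmx iv D *m dmx ix D *m dmx iy D).

(* Since the partial derivatives of the potentials are
   monomials up to scalars, (d_x W, d_y W) = (3 x^2, 4 y^3) and
   (d_u V, d_v V) = (12 u^11, 2 v), the residue
   Res[g dx dy / (3x^2, 4y^3)] is 1/12 times the coefficient of x^1 y^2 in g
   (as a polynomial in the remaining variables u, v), and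
   Res[g du dv / (12 u^11, 2v)] is 1/24 times the coefficient of u^10 v^0. *)
Definition res_W (g : Rg) : Rg :=
  \sum_(m <- msupp g | (m ix == 1%N) && (m iy == 2%N))
     (12%:R)^-1 *: (g@_m *: 'X_[m - (U_(ix) + U_(iy) *+ 2)%MM]).

Definition res_V (g : Rg) : Rg :=
  \sum_(m <- msupp g | (m iu == 10%N) && (m iv == 0%N))
     (24%:R)^-1 *: (g@_m *: 'X_[m - (U_(iu) *+ 10)%MM]).

(* left and right quantum dimensions (m = n = 2, sign (-1)^3 = -1) *)
Definition qdim_l (d0 d1 : 'M[Rg]_2) : Rg :=
  - res_W (qdim_integrand (twdiff d0 d1)).
Definition qdim_r (d0 d1 : 'M[Rg]_2) : Rg :=
  - res_V (qdim_integrand (twdiff d0 d1)).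

Definition set_u0 (p : Rg) : Rg :=
  p \mPo [tuple (if i == iu then 0 else 'X_i : Rg) | i < 4].

Definition d1_X0 : 'M[Rg]_2 :=
  \matrix_(i < 2, j < 2)
    (if i == 0 then (if j == 0 then py ^+ 2 - pv else - px)
     else (if j == 0 then px ^+ 2 else py ^+ 2 + pv)).
Definition d0_X0 : 'M[Rg]_2 := \adj d1_X0.

Definition su (s : C) (k : nat) : Rg := (s ^+ k) *: pu ^+ k.

Definition d1_Xu (s t : C) : 'M[Rg]_2 :=
  let a := py ^+ 2 - pv + (1 / 2%:R) *: (px * su s 2)
           + ((2%:R * t + 1) / 8%:R) *: su s 6 in
  let b := - px + py * su s 1 + ((t + 1) / 4%:R) *: su s 4 in
  let c := px ^+ 2 + py * px * su s 1 + (t / 4%:R) *: (px * su s 4)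
           + ((2%:R * t + 1) / 4%:R) *: (py * su s 5)
           - ((9%:R * t + 5%:R) / 48%:R) *: su s 8 in
  let d := py ^+ 2 + pv + (1 / 2%:R) *: (px * su s 2)
           + ((2%:R * t + 1) / 8%:R) *: su s 6 in
  \matrix_(i < 2, j < 2)
    (if i == 0 then (if j == 0 then a else b) else (if j == 0 then c else d)).
Definition d0_Xu (s t : C) : 'M[Rg]_2 := \adj (d1_Xu s t).

End MF.

(* Main.v *)
Require Import Defs.
From HB Require Import structures.
From mathcomp Require Import all_boot all_order all_algebra.
From mathcomp Require Import reals.
From mathcomp Require Import complex.
From mathcomp.multinomials Require Import mpoly.
From mathcomp Require Import ring lra zify.
Set Implicit Arguments.
Unset Strict Implicit.
Unset Printing Implicit Defensive.

Import Order.TTheory GRing.Theory Num.Theory.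
Local Open Scope ring_scope.


Definition e4 := (nat * nat * nat * nat)%type.
Definition add4 (a b : e4) : e4 :=
  let: (a0,a1,a2,a3) := a in let: (b0,b1,b2,b3) := b in
  (a0+b0, a1+b1, a2+b2, a3+b3)%N.
Definition mk (e : e4) : 'X_{1..4} :=
  let: (a,b,c,d) := e in [multinom nth 0%N [:: a; b; c; d] i | i < 4].

Lemma mkE e (i : 'I_4) : mk e i = nth 0%N [:: e.1.1.1; e.1.1.2; e.1.2; e.2] i.
Proof. by case: e => [[[a b] c] d]; rewrite /mk mnmE. Qed.

Lemma mkD a b : (mk a + mk b)%MM = mk (add4 a b).
Proof.
apply/mnmP => i; rewrite mnmDE !mkE.
case: a b => [[[a0 a1] a2] a3] [[[b0 b1] b2] b3] /=.
by case: i => [[|[|[|[|i]]]] Hi].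
Qed.

Lemma mk_inj : injective mk.
Proof.
move=> [[[a0 a1] a2] a3] [[[b0 b1] b2] b3] /mnmP H.
have := H (inord 0); have := H (inord 1); have := H (inord 2); have := H (inord 3).
by rewrite !mkE /= !inordK //= => -> -> -> ->.
Qed.

Lemma mk_eq a b : (mk a == mk b) = (a == b).
Proof. by apply/eqP/eqP => [/mk_inj|->]. Qed.

Section Sp.
Variable C : numFieldType.
Notation P := {mpoly C[4]}.
Definition sp := seq (C * e4).
Definition interp (s : sp) : P := \sum_(p <- s) p.1 *: 'X_[mk p.2].
Definition mul_sp (s1 s2 : sp) : sp := [seq (a.1 * b.1, add4 a.2 b.2) | a <- s1, b <- s2].
Definition scale_sp (c : C) (s : sp) : sp := [seq (c * a.1, a.2) | a <- s].
Definition coef_sp (k : e4) (s : sp) : C :=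
  foldr (fun p acc => (if p.2 == k then p.1 else 0) + acc) 0 s.

Lemma interp_cat s1 s2 : interp (s1 ++ s2) = interp s1 + interp s2.
Proof. by rewrite /interp big_cat. Qed.
Lemma interp_nil : interp [::] = 0.
Proof. by rewrite /interp big_nil. Qed.
Lemma interp_cons a s : interp (a :: s) = a.1 *: 'X_[mk a.2] + interp s.
Proof. by rewrite /interp big_cons. Qed.
Lemma interp_scale c s : interp (scale_sp c s) = c *: interp s.
Proof.
elim: s => [|a s IH]; first by rewrite /scale_sp /= interp_nil scaler0.
by rewrite /= !interp_cons IH scalerDr scalerA.
Qed.
Lemma interp_mul s1 s2 : interp (mul_sp s1 s2) = interp s1 * interp s2.
Proof.
elim: s1 => [|a s1 IH]; first by rewrite /mul_sp /= interp_nil mul0r.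
rewrite /mul_sp /= interp_cat -/(mul_sp s1 s2) IH interp_cons mulrDl; congr (_ + _).
clear IH; elim: s2 => [|b s2 IH2]; first by rewrite /= interp_nil mulr0.
rewrite /= !interp_cons IH2 mulrDr; congr (_ + _).
by rewrite -scalerAl -scalerAr scalerA -mpolyXD mkD.
Qed.

Lemma coef_interp k s : (interp s)@_(mk k) = coef_sp k s.
Proof.
elim: s => [|a s IH]; first by rewrite interp_nil mcoeff0.
rewrite interp_cons mcoeffD IH mcoeffZ mcoeffX mk_eq /=.
by case: eqP => _; rewrite ?mulr1 ?mulr0.
Qed.
End Sp.


Definition w4 (e : e4) : nat := let: (a,b,c,d) := e in (a + 6*b + 4*c + 3*d)%N.

Lemma wdeg_mk e : wdeg (mk e) = (w4 e)%:R / 6%:R.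
Proof.
case: e => [[[a b] c] d].
rewrite /wdeg !big_ord_recr big_ord0 !mkE /=.
rewrite /weight /iu /iv /ix /iy.
have E : forall k (i : 'I_4), (k < 4)%N -> (i == inord k) = (val i == k).
  by move=> k i Hk; rewrite -(inj_eq val_inj) /= inordK.
rewrite !E //=.
rewrite !natrD ?natrM. field. all: by [].
Qed.

Lemma split_mnm (m : 'X_{1..4}) : m = mk (m (inord 0), m (inord 1), m (inord 2), m (inord 3)).
Proof.
apply/mnmP => i; rewrite mkE /=.
case: i => [[|[|[|[|i]]]] Hi] //=; congr (m _); apply/val_inj; rewrite /= inordK //.
Qed.

Lemma coef_map (C : numFieldType) (g : e4 -> C) L k : uniq L ->
  coef_sp k [seq (g e, e) | e <- L] = if k \in L then g k else 0.
Proof.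
elim: L => [|a L IH] //= /andP[aL uL]; rewrite IH // inE.
case: (eqVneq a k) => [ak|ak] /=.
  by subst a; rewrite (negbTE aL) addr0 /=.
exact: add0r.
Qed.

Lemma shape (C : numFieldType) (p : {mpoly C[4]}) (L : seq e4) : uniq L ->
  (forall e, mk e \in msupp p -> e \in L) ->
  p = interp [seq (p@_(mk e), e) | e <- L].
Proof.
move=> uL HL; apply/mpolyP => m; rewrite (split_mnm m) coef_interp coef_map //.
case: ifP => // /negbT H.
apply: memN_msupp_eq0; apply: contra H; exact: HL.
Qed.

Definition L4 : seq e4 := [:: (4,0,0,0); (0,0,1,0); (1,0,0,1)]%N.
Definition L6 : seq e4 := [:: (6,0,0,0); (0,1,0,0); (2,0,1,0); (3,0,0,1); (0,0,0,2)]%N.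
Definition L8 : seq e4 := [:: (8,0,0,0); (2,1,0,0); (4,0,1,0); (0,0,2,0); (5,0,0,1); (1,0,1,1); (2,0,0,2)]%N.

Definition chk (n : nat) (L : seq e4) : bool :=
  all (fun a => all (fun b => all (fun c => all (fun d =>
    (w4 (a,b,c,d) != n) || ((a,b,c,d) \in L)) (iota 0 3)) (iota 0 3)) (iota 0 2)) (iota 0 9).

Lemma chk_ok n L e : (n <= 8)%N -> chk n L -> w4 e = n -> e \in L.
Proof.
case: e => [[[a b] c] d] /= Hn Hc Hw.
have Ha : (a < 9)%N by lia. have Hb : (b < 2)%N by lia.
have Hcc : (c < 3)%N by lia. have Hd : (d < 3)%N by lia.
have ia : a \in iota 0 9 by rewrite mem_iota; lia.
have ib : b \in iota 0 2 by rewrite mem_iota; lia.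
have ic : c \in iota 0 3 by rewrite mem_iota; lia.
have id : d \in iota 0 3 by rewrite mem_iota; lia.
move: Hc; rewrite /chk => /allP/(_ a ia)/allP/(_ b ib)/allP/(_ c ic)/allP/(_ d id).
by rewrite /= Hw eqxx.
Qed.

Lemma chk4 : chk 4 L4. Proof. by vm_compute. Qed.
Lemma chk6 : chk 6 L6. Proof. by vm_compute. Qed.
Lemma chk8 : chk 8 L8. Proof. by vm_compute. Qed.
Lemma uL4 : uniq L4. Proof. by []. Qed.
Lemma uL6 : uniq L6. Proof. by []. Qed.
Lemma uL8 : uniq L8. Proof. by []. Qed.

Lemma homog_shape (C : numFieldType) (p : {mpoly C[4]}) (n : nat) L (q : rat) :
  (n <= 8)%N -> chk n L -> uniq L -> q = n%:R / 6%:R -> whomog q p ->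
  p = interp [seq (p@_(mk e), e) | e <- L].
Proof.
move=> Hn Hc uL -> Hh; apply: shape => // e /Hh; rewrite wdeg_mk => Hw.
apply: (chk_ok Hn Hc).
have : (w4 e)%:R = n%:R :> rat.
  by have := congr1 (fun x => x * 6%:R) Hw; rewrite !mulfVK.
by move/eqP; rewrite eqr_nat => /eqP.
Qed.


Section R.
Variable C : numFieldType.
Notation P := {mpoly C[4]}.
Implicit Types s : sp C.

Lemma rM s1 s2 : interp s1 * interp s2 = interp (mul_sp s1 s2).
Proof. by rewrite interp_mul. Qed.
Lemma rD s1 s2 : interp s1 + interp s2 = interp (s1 ++ s2).
Proof. by rewrite interp_cat. Qed.
Lemma rN s : - interp s = interp (scale_sp (-1) s).
Proof. by rewrite interp_scale scaleN1r. Qed.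
Lemma rZ c s : c *: interp s = interp (scale_sp c s).
Proof. by rewrite interp_scale. Qed.
Lemma r0 : 0 = interp [::] :> P.
Proof. by rewrite interp_nil. Qed.
Lemma r1 : 1 = interp [:: (1, (0,0,0,0)%N)] :> P.
Proof.
rewrite interp_cons interp_nil addr0 scale1r.
have -> : mk (0,0,0,0)%N = 0%MM by apply/mnmP => i; rewrite mkE mnm0E; case: i => [[|[|[|[|i]]]] Hi].
by rewrite mpolyX0.
Qed.
Lemma rX2 s : interp s ^+ 2 = interp (mul_sp s s).
Proof. by rewrite expr2 interp_mul. Qed.

Lemma Xmk (i : 'I_4) e : U_(i)%MM = mk e -> 'X_i = interp [:: (1, e)] :> P.
Proof. by move=> H; rewrite interp_cons interp_nil addr0 scale1r -H. Qed.


Lemma rpu : pu C = interp [:: (1, (1,0,0,0)%N)]. Proof. by apply: Xmk; apply/mnmP => j; rewrite mnm1E mkE -(inj_eq val_inj) /=; case: j => [[|[|[|[|j]]]] Hj]; rewrite /iu /iv /ix /iy ?inordK. Qed.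
Lemma rpv : pv C = interp [:: (1, (0,1,0,0)%N)]. Proof. by apply: Xmk; apply/mnmP => j; rewrite mnm1E mkE -(inj_eq val_inj) /=; case: j => [[|[|[|[|j]]]] Hj]; rewrite /iu /iv /ix /iy ?inordK. Qed.
Lemma rpx : px C = interp [:: (1, (0,0,1,0)%N)]. Proof. by apply: Xmk; apply/mnmP => j; rewrite mnm1E mkE -(inj_eq val_inj) /=; case: j => [[|[|[|[|j]]]] Hj]; rewrite /iu /iv /ix /iy ?inordK. Qed.
Lemma rpy : py C = interp [:: (1, (0,0,0,1)%N)]. Proof. by apply: Xmk; apply/mnmP => j; rewrite mnm1E mkE -(inj_eq val_inj) /=; case: j => [[|[|[|[|j]]]] Hj]; rewrite /iu /iv /ix /iy ?inordK. Qed.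

Lemma coefE s1 s2 k : interp s1 = interp s2 -> coef_sp k s1 = coef_sp k s2.
Proof. by move=> H; rewrite -!coef_interp H. Qed.


Lemma set_u0X (m : 'X_{1..4}) : set_u0 'X_[m] = if m iu == 0%N then 'X_[m] else 0 :> P.
Proof.
rewrite /set_u0 comp_mpolyX [X in _ = if _ then X else _]mpolyXE_id !big_ord_recl big_ord0 !tnth_mktuple.
have E0 : (ord0 : 'I_4) = iu by apply/val_inj; rewrite /= inordK.
rewrite -!E0 eqxx /= !big_ord0.
case: eqP => [->|/eqP H]; first by rewrite !expr0 !mul1r.
by rewrite expr0n (negbTE H) !mul0r.
Qed.

Lemma set_u0_coef (p : P) e : e.1.1.1 = 0%N -> (set_u0 p)@_(mk e) = p@_(mk e).
Proof.
move=> He.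
have -> : p@_(mk e) = (\sum_(m <- msupp p) p@_m *: 'X_[m])@_(mk e) by rewrite -mpolyE.
rewrite /set_u0 comp_mpolyEX !raddf_sum /=.
apply: eq_bigr => m _.
rewrite -/(set_u0 'X_[m]) set_u0X !mcoeffZ; case: eqP => // Hm.
rewrite mcoeff0 mcoeffX; case: eqP => [E|]; last by rewrite !mulr0.
by exfalso; apply: Hm; rewrite E mkE /iu inordK.
Qed.

Definition Pb (b : bool) (p : P) := forall m : 'X_{1..4}, odd (m iy) != b -> p@_m = 0.

Lemma Pb0 b : Pb b 0. Proof. by move=> m _; rewrite mcoeff0. Qed.
Lemma PbD b p q : Pb b p -> Pb b q -> Pb b (p + q).
Proof. by move=> Hp Hq m H; rewrite mcoeffD Hp // Hq // addr0. Qed.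
Lemma PbN b p : Pb b p -> Pb b (- p).
Proof. by move=> Hp m H; rewrite mcoeffN Hp // oppr0. Qed.
Lemma PbB b p q : Pb b p -> Pb b q -> Pb b (p - q).
Proof. by move=> Hp Hq; apply: PbD => //; apply: PbN. Qed.
Lemma PbZ b c p : Pb b p -> Pb b (c *: p).
Proof. by move=> Hp m H; rewrite mcoeffZ Hp // mulr0. Qed.
Lemma PbM b1 b2 p q : Pb b1 p -> Pb b2 q -> Pb (b1 (+) b2) (p * q).
Proof.
move=> Hp Hq m H; rewrite mcoeffM big1 // => [[k1 k2]] /= /eqP E.
have Ho : odd (m iy) = odd (k1 iy) (+) odd (k2 iy).
  by rewrite -oddD -mnmDE -E.
 case: (eqVneq (odd (k1 iy)) b1) => H1.
  rewrite Hq ?mulr0 //; apply: contra H => /eqP H2; rewrite Ho H1 H2 //.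
by rewrite Hp ?mul0r.
Qed.
Lemma Pbsum b (I : finType) (F : I -> P) : (forall i, Pb b (F i)) -> Pb b (\sum_i F i).
Proof.
move=> H; elim/big_rec: _ => [|i x _ Hx]; [exact: Pb0 | exact: PbD].
Qed.
Lemma Pbderiv b (i : 'I_4) p : Pb b p -> Pb (b (+) (i == iy)) (mderiv i p).
Proof.
move=> Hp m H; rewrite mcoeff_deriv Hp ?mul0rn //.
apply: contra H; rewrite mnmDE mnm1E oddD => /eqP <-.
by case: (i == iy); rewrite /= ?addbT ?negbK ?addbF.
Qed.

Lemma coef_notin k s : k \notin [seq p.2 | p <- s] -> coef_sp k s = 0.
Proof.
elim: s => [|p s IH] //=; rewrite inE negb_or => /andP[H1 H2].
by rewrite eq_sym (negbTE H1) add0r IH.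
Qed.

Lemma coef_zero k s : (forall p, p \in s -> p.2 = k -> p.1 = 0) -> coef_sp k s = 0.
Proof.
elim: s => [|p s IH] //= H.
rewrite IH ?addr0; last by move=> q Hq; apply: H; rewrite inE Hq orbT.
by case: eqP => // E; apply: H => //; rewrite inE eqxx.
Qed.

Lemma Pb_interp b s : (forall p, p \in s -> odd p.2.2 != b -> p.1 = 0) -> Pb b (interp s).
Proof.
move=> H m Hm; rewrite (split_mnm m) coef_interp; apply: coef_zero => p Hp E.
by apply: H => //; rewrite E /=; move: Hm; rewrite /iy.
Qed.

Lemma coef_in k s : coef_sp k s != 0 -> k \in [seq p.2 | p <- s].
Proof. by apply: contraR => H; rewrite coef_notin. Qed.

Lemma homog_interp n s : all (fun p => w4 p.2 == n) s -> whomog (n%:R / 6%:R) (interp s).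
Proof.
move=> /allP H m; rewrite mcoeff_msupp (split_mnm m) coef_interp => /coef_in /mapP [p Hp ->].
by rewrite wdeg_mk (eqP (H p Hp)).
Qed.

Lemma interp_eqK (K : seq e4) s1 s2 :
  all (fun p => p.2 \in K) s1 -> all (fun p => p.2 \in K) s2 ->
  (forall k, k \in K -> coef_sp k s1 = coef_sp k s2) -> interp s1 = interp s2.
Proof.
move=> /allP H1 /allP H2 H; apply/mpolyP => m; rewrite (split_mnm m) !coef_interp.
set k := (_, _, _, _).
case: (boolP (k \in K)) => Hk; first exact: H.
rewrite !coef_notin //.
  by apply: contra Hk => /mapP [p Hp ->]; exact: H2.
by apply: contra Hk => /mapP [p Hp ->]; exact: H1.
Qed.
End R.


Section Alg.
Variable C : numFieldType.

Lemma cancelP (c X f g : C) : c != 0 -> g = 0 -> c * (X - f) = g -> X = f.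
Proof. by move=> Hc -> /eqP; rewrite mulf_eq0 (negbTE Hc) subr_eq0 => /eqP. Qed.
Lemma cancelN (c X f g : C) : c != 0 -> g = 0 -> c * (X - f) = - g -> X = f.
Proof. by move=> Hc Hg; rewrite Hg oppr0; apply: cancelP. Qed.

Lemma nat_neq0 n : (n.+1%:R : C) != 0. Proof. by rewrite pnatr_eq0. Qed.

Lemma comb (a b k : C) : a = 0 -> b = 0 -> b + k * a = 0.
Proof. by move=> -> ->; rewrite mulr0 addr0. Qed.
Lemma cancel2 (c X f g h k : C) : g = 0 -> h = 0 -> c != 0 -> c * (X - f) = g + k * h -> X = f.
Proof. by move=> -> -> Hc; rewrite mulr0 addr0 => /eqP; rewrite mulf_eq0 (negbTE Hc) subr_eq0 => /eqP. Qed.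

Ltac solv c E := first [ apply: (cancelP (c := c) _ E); [ | by field ] | apply: (cancelN (c := c) _ E); [ | by field ]].

Lemma adjL (A1 A2 A3 B1 B2 C1 C2 C3 C4 C5 C6 D1 D2 D3 P1 P2 P3 Q1 Q2 R1 R2 R3 R4 R5 R6 W1 W2 W3 : C) :
  Q1 + B1 = 0 -> - Q2 - B2 = 0 -> A1 - W1 = 0 ->
  A1*Q1 + A2 - W2 + B1*W1 = 0 -> A1*Q2 + A3 - W3 + B2*W1 = 0 ->
  P1 - D1 = 0 -> P2 + C1*P1 + D1*R1 - D2 = 0 -> P3 + C2*P1 + D1*R2 - D3 = 0 ->
  C1 + R1 = 0 -> C3 + R3 = 0 -> C4 + R4 = 0 -> C2 + C4*P1 + R2 + D1*R4 = 0 ->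
  C4*P2 + C5 + R5 + D2*R4 = 0 -> C4*P3 + C6 + R6 + D3*R4 = 0 ->
  [/\ Q1 = - B1, Q2 = - B2, W1 = A1, W2 = A2 & W3 = A3] /\
  [/\ P1 = D1, P2 = D2 & P3 = D3] /\
  [/\ R1 = - C1, R2 = - C2, R3 = - C3 & R4 = - C4] /\ R5 = - C5 /\ R6 = - C6.
Proof.
have o : (1 : C) != 0 by rewrite oner_eq0.
move=> e1 e2 e3 e4 e5 e6 e7 e8 e9 e10 e11 e12 e13 e14.
have hQ1 : Q1 = - B1 by solv (1:C) e1.
have hQ2 : Q2 = - B2 by solv (1:C) e2.
have hW1 : W1 = A1 by solv (1:C) e3.
have hP1 : P1 = D1 by solv (1:C) e6.
have hR1 : R1 = - C1 by solv (1:C) e9.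
have hR3 : R3 = - C3 by solv (1:C) e10.
have hR4 : R4 = - C4 by solv (1:C) e11.
subst Q1 Q2 W1 P1 R1 R3 R4.
have hW2 : W2 = A2 by solv (1:C) e4.
have hW3 : W3 = A3 by solv (1:C) e5.
have hP2 : P2 = D2 by solv (1:C) e7.
have hR2 : R2 = - C2 by solv (1:C) e12.
subst W2 W3 P2 R2.
have hP3 : P3 = D3 by solv (1:C) e8.
have hR5 : R5 = - C5 by solv (1:C) e13.
subst P3 R5.
have hR6 : R6 = - C6 by solv (1:C) e14.
by subst R6.
Qed.

Lemma solve0 (A1 A2 A3 B1 B2 C1 C2 C3 C4 C5 C6 D1 D2 D3 : C) :
  C1 - B1 = 0 ->
  D1 + A1 + C3 - B1*C1 = 0 ->
  - D1 + A1 + C4 = 0 ->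
  D2 + A2 - B1*C3 = 0 ->
  - D2 + A2 - B1*C4 = 0 ->
  A1*D2 + A2*D1 + C5 - B1*C2 - B2*C1 = 0 ->
  B1 = 0 -> [/\ A2 = 0, D2 = 0, C1 = 0 & C5 = 0].
Proof.
have o : (1 : C) != 0 by rewrite oner_eq0.
have t2 : (2%:R : C) != 0 by rewrite pnatr_eq0.
move=> f1 f2 f3 f4 f5 f7 hB; subst B1.
have hC1 : C1 = 0 by solv (1:C) f1.
have hA2 : A2 = 0.
  have f45 : (D2 + A2 - 0*C3) + (- D2 + A2 - 0*C4) = 0 by rewrite f4 f5 addr0.
  by solv (2%:R:C) f45.
subst C1 A2.
have hD2 : D2 = 0 by solv (1:C) f5.
subst D2.
have hC5 : C5 = 0 by solv (1:C) f7.
by [].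
Qed.

Lemma solve1 (A1 A2 A3 B1 B2 C1 C2 C3 C4 C5 C6 D1 D2 D3 : C) :
  C1 - B1 = 0 ->
  D1 + A1 + C3 - B1*C1 = 0 ->
  - D1 + A1 + C4 = 0 ->
  D2 + A2 - B1*C3 = 0 ->
  - D2 + A2 - B1*C4 = 0 ->
  A1*D1 + C2 - B2 = 0 ->
  A1*D2 + A2*D1 + C5 - B1*C2 - B2*C1 = 0 ->
  D3 + A2*D2 + A3 - B1*C5 - B2*C3 = 0 ->
  - D3 + A3 - B2*C4 = 0 ->
  A1*D3 + A3*D1 + C6 - B2*C2 = 0 ->
  A2*D3 + A3*D2 - B1*C6 - B2*C5 = 0 ->
  A3*D3 - B2*C6 + 1 = 0 ->
  B1 != 0 ->
  exists t al be : C, let s := B1 in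
  (t ^+ 2 = 1 / 3%:R /\ s ^+ 12 = - 576%:R * (26%:R * t - 15%:R)) /\
  (B2 = (t + 1) / 4%:R * s ^+ 4 /\ C1 = s) /\
  (A1 = s ^+ 2 / 2%:R - be /\ A2 = be * s /\
      A3 = (2%:R * t + 1) / 8%:R * s ^+ 6 + be * ((t + 1) / 4%:R * s ^+ 4)) /\
  (D1 = s ^+ 2 / 2%:R + al /\ D2 = - (al * s) /\
      D3 = (2%:R * t + 1) / 8%:R * s ^+ 6 - al * ((t + 1) / 4%:R * s ^+ 4)) /\
  (C2 = t / 4%:R * s ^+ 4 - al * (s ^+ 2 / 2%:R) + be * (s ^+ 2 / 2%:R) + al * be /\
      C3 = be - al /\ C4 = al + be /\
      C5 = (2%:R * t + 1) / 4%:R * s ^+ 5 - al * be * s /\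
      C6 = - ((9%:R * t + 5%:R) / 48%:R * s ^+ 8) - al * ((2%:R * t + 1) / 8%:R * s ^+ 6)
           + be * ((2%:R * t + 1) / 8%:R * s ^+ 6) - al * be * ((t + 1) / 4%:R * s ^+ 4)).
Proof.
have o : (1 : C) != 0 by rewrite oner_eq0.
have t2 : (2%:R : C) != 0 by rewrite pnatr_eq0.
move=> f1 f2 f3 f4 f5 f6 f7 f8 f9 f10 f11 f12 sN0.
exists (4%:R * B2 / B1 ^+ 4 - 1), (- D2 / B1), (A2 / B1).
cbv zeta.
set t := (4%:R * B2 / B1 ^+ 4 - 1); set al := - D2 / B1; set be := A2 / B1.
have hB2 : B2 = (t + 1) / 4%:R * B1 ^+ 4 by rewrite /t; field; done.
have hA2 : A2 = be * B1 by rewrite /be; field; done.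
have hD2 : D2 = - (al * B1) by rewrite /al; field; done.
clearbody t al be; subst B2 A2 D2.
move: sN0 f1 f2 f3 f4 f5 f6 f7 f8 f9 f10 f11 f12.
move: B1 => s sN0 f1 f2 f3 f4 f5 f6 f7 f8 f9 f10 f11 f12.
have hC1 : C1 = s by solv (1:C) f1.
subst C1.
have hC3 : C3 = be - al by solv s f4.
have hC4 : C4 = al + be by solv s f5.
subst C3 C4.
have hD1 : D1 = A1 + al + be by solv (1:C) f3.
subst D1.
have hA1 : A1 = s ^+ 2 / 2%:R - be by solv (2%:R:C) f2.
subst A1.
have hC2 : C2 = t / 4%:R * s ^+ 4 - al * (s ^+ 2 / 2%:R) + be * (s ^+ 2 / 2%:R) + al * be by solv (1:C) f6.
subst C2.
have hC5 : C5 = (2%:R * t + 1) / 4%:R * s ^+ 5 - al * be * s by solv (1:C) f7.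
subst C5.
have hD3 : D3 = A3 - (t + 1) / 4%:R * s ^+ 4 * (al + be) by solv (1:C) f9.
subst D3.
have hA3 : A3 = (2%:R * t + 1) / 8%:R * s ^+ 6 + be * ((t + 1) / 4%:R * s ^+ 4) by solv (2%:R:C) f8.
subst A3.
have hs : - (3%:R / 16%:R) * s ^+ 9 != 0.
  by rewrite mulf_neq0 ?expf_neq0 // oppr_eq0 mulf_neq0 ?invr_eq0 ?pnatr_eq0.
have ht : t ^+ 2 = 1 / 3%:R.
  apply: (cancelP hs (comb s f10 f11)); by field.
have hT : t ^+ 2 - 1 / 3%:R = 0 by rewrite ht subrr.
have hC6 : C6 = - ((9%:R * t + 5%:R) / 48%:R * s ^+ 8) - al * ((2%:R * t + 1) / 8%:R * s ^+ 6)
           + be * ((2%:R * t + 1) / 8%:R * s ^+ 6) - al * be * ((t + 1) / 4%:R * s ^+ 4).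
  apply: (cancel2 (k := s ^+ 8 / 16%:R) f10 hT o); by field.
subst C6.
set M := - 576%:R * (26%:R * t - 15%:R).
have hS : s ^+ 12 = M.
  have g12 := congr1 (fun x => - M * x) f12; rewrite /= mulr0 in g12.
  apply: (cancel2 (k := M * ((t + 1) / 4%:R * s ^+ 4) * (s ^+ 8 / 16%:R) + s ^+ 12 * (- 2028%:R + M * (3%:R / 32%:R - t / 64%:R))) g12 hT o).
  rewrite /M; by field.
by do !split => //; ring.
Qed.
End Alg.


Section Q.
Variable C : numFieldType.
Notation P := {mpoly C[4]}.

Lemma block_entries (b : bool) (A B D E : 'M[P]_2) :
  (forall i j, Pb b (A i j)) -> (forall i j, Pb b (B i j)) ->
  (forall i j, Pb b (D i j)) -> (forall i j, Pb b (E i j)) ->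
  forall i j, Pb b (block_mx A B D E i j).
Proof.
move=> HA HB HD HE i j; rewrite -(splitK i) -(splitK j).
case: (split i) => a; case: (split j) => c;
  by rewrite /= ?block_mxEul ?block_mxEur ?block_mxEdl ?block_mxEdr.
Qed.

Lemma Pb_mulmx b1 b2 n m k (A : 'M[P]_(n, m)) (B : 'M[P]_(m, k)) :
  (forall i j, Pb b1 (A i j)) -> (forall i j, Pb b2 (B i j)) ->
  forall i j, Pb (b1 (+) b2) ((A *m B) i j).
Proof.
move=> HA HB i j; rewrite mxE; apply: Pbsum => l; exact: PbM.
Qed.

Lemma Pb_dmx b (k : 'I_4) (A : 'M[P]_(2 + 2)) :
  (forall i j, Pb b (A i j)) -> forall i j, Pb (b (+) (k == iy)) (dmx k A i j).
Proof. by move=> HA i j; rewrite mxE; apply: Pbderiv. Qed.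

Lemma qdimL0 (d0 d1 : 'M[P]_2) :
  (forall i j, Pb false (d0 i j)) -> (forall i j, Pb false (d1 i j)) -> qdim_l d0 d1 = 0.
Proof.
move=> H0 H1.
have HD : forall i j, Pb false (twdiff d0 d1 i j).
  by apply: block_entries => // i j; rewrite mxE; apply: Pb0.
have Eu : (iu == iy) = false by rewrite /iu /iy -(inj_eq val_inj) /= !inordK.
have Ev : (iv == iy) = false by rewrite /iv /iy -(inj_eq val_inj) /= !inordK.
have Ex : (ix == iy) = false by rewrite /ix /iy -(inj_eq val_inj) /= !inordK.
have Ey : (iy == iy) = true by rewrite eqxx.
have Hu := Pb_dmx (k:=iu) HD; have Hv := Pb_dmx (k:=iv) HD; have Hx := Pb_dmx (k:=ix) HD; have Hy := Pb_dmx (k:=iy) HD.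
rewrite Eu in Hu; rewrite Ev in Hv; rewrite Ex in Hx; rewrite Ey in Hy.
have Hp : forall i j, Pb true _ := Pb_mulmx (Pb_mulmx (Pb_mulmx Hu Hv) Hx) Hy.
have Hg : Pb true (qdim_integrand (twdiff d0 d1)).
  move: Hp; rewrite /qdim_integrand /supertr /mxtrace.
  move: (_ *m _) => M HM; apply: PbB; apply: Pbsum => i; rewrite !mxE; exact: HM.
rewrite /qdim_l /res_W big1_seq ?oppr0 // => m /andP [/andP [_ /eqP Hm] _].
by rewrite Hg ?scale0r ?scaler0 // Hm.
Qed.
End Q.


Section S1.
Variable C : numFieldType.
Notation P := {mpoly C[4]}.

Lemma adj2 (A : 'M[P]_2) :
  \adj A = \matrix_(i < 2, j < 2)
    (if i == 0 then (if j == 0 then A 1 1 else - A 0 1)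
     else (if j == 0 then - A 1 0 else A 0 0)).
Proof.
apply/matrixP => i j; rewrite !mxE /cofactor det_mx11 !mxE.
case: i => [[|[|i]] Hi]; case: j => [[|[|j]] Hj] //=;
  rewrite ?expr0 ?expr1 ?exprS ?mul1r ?mulN1r ?mulNr ?mulrN ?opprK ?mul1r //.
all: try congr (- _); congr (A _ _); exact/val_inj.
Qed.


Definition ent4 (c1 c2 c3 : C) : sp C := [:: (c1, (4,0,0,0)%N); (c2, (0,0,1,0)%N); (c3, (1,0,0,1)%N)].
Definition ent6 (c1 c2 c3 c4 c5 : C) : sp C :=
  [:: (c1, (6,0,0,0)%N); (c2, (0,1,0,0)%N); (c3, (2,0,1,0)%N); (c4, (3,0,0,1)%N); (c5, (0,0,0,2)%N)].
Definition ent8 (c1 c2 c3 c4 c5 c6 c7 : C) : sp C :=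
  [:: (c1, (8,0,0,0)%N); (c2, (2,1,0,0)%N); (c3, (4,0,1,0)%N); (c4, (0,0,2,0)%N);
      (c5, (5,0,0,1)%N); (c6, (1,0,1,1)%N); (c7, (2,0,0,2)%N)].

Definition mx2 (a b c d : P) : 'M[P]_2 :=
  \matrix_(i < 2, j < 2) (if i == 0 then (if j == 0 then a else b) else (if j == 0 then c else d)).

Definition Dm1 (A1 A2 A3 B1 B2 C1 C2 C3 C4 C5 C6 D1 D2 D3 : C) : 'M[P]_2 :=
  mx2 (interp (ent6 A3 (-1) A1 A2 1)) (interp (ent4 B2 (-1) B1))
      (interp (ent8 C6 C4 C2 1 C5 C1 C3)) (interp (ent6 D3 1 D1 D2 1)).
Definition Dm0 (P1 P2 P3 Q1 Q2 R1 R2 R3 R4 R5 R6 W1 W2 W3 : C) : 'M[P]_2 :=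
  mx2 (interp (ent6 P3 1 P1 P2 1)) (interp (ent4 Q2 1 Q1))
      (interp (ent8 R6 R4 R2 (-1) R5 R1 R3)) (interp (ent6 W3 (-1) W1 W2 1)).

Lemma entry_shape (p : P) q L n (tgt : sp C) e :
  (n <= 8)%N -> chk n L -> uniq L -> whomog q p -> set_u0 p = interp tgt ->
  e.1.1.1 = 0%N -> coef_sp e tgt != 0 -> w4 e = n ->
  q = n%:R / 6%:R /\ p = interp [seq (p@_(mk e), e) | e <- L].
Proof.
move=> Hn Hc uL Hh Hu He Hne Hw.
have Hq : q = n%:R / 6%:R.
  rewrite -Hw -wdeg_mk; symmetry; apply: Hh.
  by rewrite mcoeff_msupp -set_u0_coef // Hu coef_interp.
split => //; exact: (homog_shape Hn Hc uL Hq Hh).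
Qed.

Lemma ucoef (p : P) tgt e c : set_u0 p = interp tgt -> e.1.1.1 = 0%N -> coef_sp e tgt = c -> p@_(mk e) = c.
Proof. by move=> Hu He <-; rewrite -set_u0_coef // Hu coef_interp. Qed.


Ltac reify := rewrite ?rpu ?rpv ?rpx ?rpy; repeat progress rewrite ?rX2 ?rM ?rN ?rZ ?rD.
Ltac reifyH H := rewrite ?rpu ?rpv ?rpx ?rpy in H; repeat progress rewrite ?rX2 ?rM ?rN ?rZ ?rD in H.
Ltac cnz := rewrite /= ?mulr1 ?mul1r ?addr0 ?add0r ?mulN1r ?oppr_eq0 ?oner_eq0 //.

Lemma stage1 (qY : 'I_(2 + 2) -> rat) (d0 d1 : 'M[P]_2) :
  graded_mf qY d0 d1 -> map_mx (@set_u0 C) d0 = d0_X0 C -> map_mx (@set_u0 C) d1 = d1_X0 C ->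
  [/\ 1 + qY (lshift 2 0) - qY (rshift 2 0) = 6%:R / 6%:R,
      1 + qY (lshift 2 0) - qY (rshift 2 1) = 4%:R / 6%:R,
      1 + qY (lshift 2 1) - qY (rshift 2 0) = 8%:R / 6%:R &
      1 + qY (lshift 2 1) - qY (rshift 2 1) = 6%:R / 6%:R] /\
  exists A1 A2 A3 B1 B2 C1 C2 C3 C4 C5 C6 D1 D2 D3 P1 P2 P3 Q1 Q2 R1 R2 R3 R4 R5 R6 W1 W2 W3 : C,
    d1 = Dm1 A1 A2 A3 B1 B2 C1 C2 C3 C4 C5 C6 D1 D2 D3 /\
    d0 = Dm0 P1 P2 P3 Q1 Q2 R1 R2 R3 R4 R5 R6 W1 W2 W3.
Proof.
move=> Hg Hu0 Hu1.
have G1 i j : whomog (1 + qY (lshift 2 i) - qY (rshift 2 j)) (d1 i j).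
  by have := Hg (lshift 2 i) (rshift 2 j); rewrite /twdiff block_mxEur.
have G0 i j : whomog (1 + qY (rshift 2 i) - qY (lshift 2 j)) (d0 i j).
  by have := Hg (rshift 2 i) (lshift 2 j); rewrite /twdiff block_mxEdl.
have U1 i j : set_u0 (d1 i j) = d1_X0 C i j by rewrite -Hu1 mxE.
have U0 i j : set_u0 (d0 i j) = d0_X0 C i j by rewrite -Hu0 mxE.
have T100 := U1 0 0; rewrite /d1_X0 mxE /= in T100; reifyH T100.
have [q100 S100] := entry_shape (n:=6) (e:=(0,0,0,2)%N) isT chk6 uL6 (G1 0 0) T100 erefl ltac:(cnz) erefl.
have c100_0 : (d1 0 0)@_(mk (0,1,0,0)%N) = -1 by apply: (ucoef T100); [done | rewrite /=; ring].
have c100_1 : (d1 0 0)@_(mk (0,0,0,2)%N) = 1 by apply: (ucoef T100); [done | rewrite /=; ring].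
have T101 := U1 0 1; rewrite /d1_X0 mxE /= in T101; reifyH T101.
have [q101 S101] := entry_shape (n:=4) (e:=(0,0,1,0)%N) isT chk4 uL4 (G1 0 1) T101 erefl ltac:(cnz) erefl.
have c101_0 : (d1 0 1)@_(mk (0,0,1,0)%N) = -1 by apply: (ucoef T101); [done | rewrite /=; ring].
have T110 := U1 1 0; rewrite /d1_X0 mxE /= in T110; reifyH T110.
have [q110 S110] := entry_shape (n:=8) (e:=(0,0,2,0)%N) isT chk8 uL8 (G1 1 0) T110 erefl ltac:(cnz) erefl.
have c110_0 : (d1 1 0)@_(mk (0,0,2,0)%N) = 1 by apply: (ucoef T110); [done | rewrite /=; ring].
have T111 := U1 1 1; rewrite /d1_X0 mxE /= in T111; reifyH T111.
have [q111 S111] := entry_shape (n:=6) (e:=(0,0,0,2)%N) isT chk6 uL6 (G1 1 1) T111 erefl ltac:(cnz) erefl.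
have c111_0 : (d1 1 1)@_(mk (0,1,0,0)%N) = 1 by apply: (ucoef T111); [done | rewrite /=; ring].
have c111_1 : (d1 1 1)@_(mk (0,0,0,2)%N) = 1 by apply: (ucoef T111); [done | rewrite /=; ring].
have T000 := U0 0 0; rewrite /d0_X0 adj2 mxE /d1_X0 !mxE /= in T000; reifyH T000.
have [q000 S000] := entry_shape (n:=6) (e:=(0,0,0,2)%N) isT chk6 uL6 (G0 0 0) T000 erefl ltac:(cnz) erefl.
have c000_0 : (d0 0 0)@_(mk (0,1,0,0)%N) = 1 by apply: (ucoef T000); [done | rewrite /=; ring].
have c000_1 : (d0 0 0)@_(mk (0,0,0,2)%N) = 1 by apply: (ucoef T000); [done | rewrite /=; ring].
have T001 := U0 0 1; rewrite /d0_X0 adj2 mxE /d1_X0 !mxE /= in T001; reifyH T001.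
have [q001 S001] := entry_shape (n:=4) (e:=(0,0,1,0)%N) isT chk4 uL4 (G0 0 1) T001 erefl ltac:(cnz) erefl.
have c001_0 : (d0 0 1)@_(mk (0,0,1,0)%N) = 1 by apply: (ucoef T001); [done | rewrite /=; ring].
have T010 := U0 1 0; rewrite /d0_X0 adj2 mxE /d1_X0 !mxE /= in T010; reifyH T010.
have [q010 S010] := entry_shape (n:=8) (e:=(0,0,2,0)%N) isT chk8 uL8 (G0 1 0) T010 erefl ltac:(cnz) erefl.
have c010_0 : (d0 1 0)@_(mk (0,0,2,0)%N) = -1 by apply: (ucoef T010); [done | rewrite /=; ring].
have T011 := U0 1 1; rewrite /d0_X0 adj2 mxE /d1_X0 !mxE /= in T011; reifyH T011.
have [q011 S011] := entry_shape (n:=6) (e:=(0,0,0,2)%N) isT chk6 uL6 (G0 1 1) T011 erefl ltac:(cnz) erefl.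
have c011_0 : (d0 1 1)@_(mk (0,1,0,0)%N) = -1 by apply: (ucoef T011); [done | rewrite /=; ring].
have c011_1 : (d0 1 1)@_(mk (0,0,0,2)%N) = 1 by apply: (ucoef T011); [done | rewrite /=; ring].
split; first by [].
exists (d1 0 0)@_(mk (2,0,1,0)%N), (d1 0 0)@_(mk (3,0,0,1)%N), (d1 0 0)@_(mk (6,0,0,0)%N).
exists (d1 0 1)@_(mk (1,0,0,1)%N), (d1 0 1)@_(mk (4,0,0,0)%N).
exists (d1 1 0)@_(mk (1,0,1,1)%N), (d1 1 0)@_(mk (4,0,1,0)%N), (d1 1 0)@_(mk (2,0,0,2)%N),
  (d1 1 0)@_(mk (2,1,0,0)%N), (d1 1 0)@_(mk (5,0,0,1)%N), (d1 1 0)@_(mk (8,0,0,0)%N).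
exists (d1 1 1)@_(mk (2,0,1,0)%N), (d1 1 1)@_(mk (3,0,0,1)%N), (d1 1 1)@_(mk (6,0,0,0)%N).
exists (d0 0 0)@_(mk (2,0,1,0)%N), (d0 0 0)@_(mk (3,0,0,1)%N), (d0 0 0)@_(mk (6,0,0,0)%N).
exists (d0 0 1)@_(mk (1,0,0,1)%N), (d0 0 1)@_(mk (4,0,0,0)%N).
exists (d0 1 0)@_(mk (1,0,1,1)%N), (d0 1 0)@_(mk (4,0,1,0)%N), (d0 1 0)@_(mk (2,0,0,2)%N),
  (d0 1 0)@_(mk (2,1,0,0)%N), (d0 1 0)@_(mk (5,0,0,1)%N), (d0 1 0)@_(mk (8,0,0,0)%N).
exists (d0 1 1)@_(mk (2,0,1,0)%N), (d0 1 1)@_(mk (3,0,0,1)%N), (d0 1 1)@_(mk (6,0,0,0)%N).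
have E2 : forall i : 'I_2, i = 0 \/ i = 1.
  by case=> [[|[|i]] Hi]; [left | right | by []]; apply/val_inj.
split; apply/matrixP => i j; rewrite /Dm1 /Dm0 /mx2 mxE;
  case: (E2 i) => ->; case: (E2 j) => -> /=.
- by rewrite {1}S100 /= c100_0 c100_1.
- by rewrite {1}S101 /= c101_0.
- by rewrite {1}S110 /= c110_0.
- by rewrite {1}S111 /= c111_0 c111_1.
- by rewrite {1}S000 /= c000_0 c000_1.
- by rewrite {1}S001 /= c001_0.
- by rewrite {1}S010 /= c010_0.
- by rewrite {1}S011 /= c011_0 c011_1.
Qed.
End S1.


Section S2.
Variable C : numFieldType.
Notation P := {mpoly C[4]}.

Fixpoint pow_sp (s : sp C) (n : nat) : sp C :=
  if n is n'.+1 then mul_sp s (pow_sp s n') else [:: (1, (0,0,0,0)%N)].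

Lemma rXn s n : interp s ^+ n = interp (pow_sp s n).
Proof.
elim: n => [|n IH]; first by rewrite expr0 r1.
by rewrite exprS IH rM.
Qed.

Ltac reifyH2 H := rewrite ?rpu ?rpv ?rpx ?rpy in H; repeat progress rewrite ?rXn ?rM ?rN ?rZ ?rD in H.

Lemma conv (l r e : C) : l = r -> e = l - r -> e = 0.
Proof. by move=> -> ->; rewrite subrr. Qed.

Lemma mf_ul (d0 d1 : 'M[P]_2) f : is_mf f d0 d1 -> d1 *m d0 = f%:M.
Proof.
rewrite /is_mf /twdiff mulmx_block !mul0mx !mulmx0 !addr0 !add0r (scalar_mx_block 2 2).
by case/eq_block_mx.
Qed.

Lemma mf_entry (d0 d1 : 'M[P]_2) f i j : d1 *m d0 = f%:M ->
  d1 i 0 * d0 0 j + d1 i 1 * d0 1 j = f *+ (i == j).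
Proof.
move=> H; have := congr1 (fun M : 'M[P]_2 => M i j) H; rewrite !mxE /= => <-.
rewrite !big_ord_recl big_ord0 addr0.
have -> : lift ord0 ord0 = 1 :> 'I_2 by apply/val_inj.
have -> : ord0 = 0 :> 'I_2 by apply/val_inj.
done.
Qed.

Lemma stage2 (A1 A2 A3 B1 B2 C1 C2 C3 C4 C5 C6 D1 D2 D3 P1 P2 P3 Q1 Q2 R1 R2 R3 R4 R5 R6 W1 W2 W3 : C) :
  is_mf (Wpot C - Vpot C) (Dm0 P1 P2 P3 Q1 Q2 R1 R2 R3 R4 R5 R6 W1 W2 W3)
                          (Dm1 A1 A2 A3 B1 B2 C1 C2 C3 C4 C5 C6 D1 D2 D3) ->
  Dm0 P1 P2 P3 Q1 Q2 R1 R2 R3 R4 R5 R6 W1 W2 W3 =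
    Dm0 D1 D2 D3 (- B1) (- B2) (- C1) (- C2) (- C3) (- C4) (- C5) (- C6) A1 A2 A3 /\
  ([/\ C1 - B1 = 0, D1 + A1 + C3 - B1*C1 = 0, - D1 + A1 + C4 = 0, D2 + A2 - B1*C3 = 0 & - D2 + A2 - B1*C4 = 0] /\ [/\ A1*D1 + C2 - B2 = 0, A1*D2 + A2*D1 + C5 - B1*C2 - B2*C1 = 0, D3 + A2*D2 + A3 - B1*C5 - B2*C3 = 0, - D3 + A3 - B2*C4 = 0 & A1*D3 + A3*D1 + C6 - B2*C2 = 0] /\ A2*D3 + A3*D2 - B1*C6 - B2*C5 = 0 /\ A3*D3 - B2*C6 + 1 = 0).
Proof.
move/mf_ul => H.
have E01 := mf_entry 0 1 H; have E10 := mf_entry 1 0 H; have E00 := mf_entry 0 0 H.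
rewrite /Dm0 /Dm1 /mx2 /Wpot /Vpot !mxE /= mulr0n in E01 E10 E00.
rewrite mulr1n in E00.
rewrite r0 in E01 E10.
reifyH2 E01. reifyH2 E10. reifyH2 E00.
have g1 : Q1 + B1 = 0 by apply: (conv (coefE (1,0,0,3)%N E01)); rewrite /=; ring.
have g2 : - Q2 - B2 = 0 by apply: (conv (coefE (4,1,0,0)%N E01)); rewrite /=; ring.
have g3 : A1 - W1 = 0 by apply: (conv (coefE (2,0,2,0)%N E01)); rewrite /=; ring.
have g4 : A1*Q1 + A2 - W2 + B1*W1 = 0 by apply: (conv (coefE (3,0,1,1)%N E01)); rewrite /=; ring.
have g5 : A1*Q2 + A3 - W3 + B2*W1 = 0 by apply: (conv (coefE (6,0,1,0)%N E01)); rewrite /=; ring.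
have g6 : P1 - D1 = 0 by apply: (conv (coefE (2,0,3,0)%N E10)); rewrite /=; ring.
have g7 : P2 + C1*P1 + D1*R1 - D2 = 0 by apply: (conv (coefE (3,0,2,1)%N E10)); rewrite /=; ring.
have g8 : P3 + C2*P1 + D1*R2 - D3 = 0 by apply: (conv (coefE (6,0,2,0)%N E10)); rewrite /=; ring.
have g9 : C1 + R1 = 0 by apply: (conv (coefE (1,0,1,3)%N E10)); rewrite /=; ring.
have g10 : C3 + R3 = 0 by apply: (conv (coefE (2,0,0,4)%N E10)); rewrite /=; ring.
have g11 : C4 + R4 = 0 by apply: (conv (coefE (2,2,0,0)%N E10)); rewrite /=; ring.
have g12 : C2 + C4*P1 + R2 + D1*R4 = 0 by apply: (conv (coefE (4,1,1,0)%N E10)); rewrite /=; ring.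
have g13 : C4*P2 + C5 + R5 + D2*R4 = 0 by apply: (conv (coefE (5,1,0,1)%N E10)); rewrite /=; ring.
have g14 : C4*P3 + C6 + R6 + D3*R4 = 0 by apply: (conv (coefE (8,1,0,0)%N E10)); rewrite /=; ring.
have [[hQ1 hQ2 hW1 hW2 hW3] [[hP1 hP2 hP3] [[hR1 hR2 hR3 hR4] [hR5 hR6]]]] := adjL g1 g2 g3 g4 g5 g6 g7 g8 g9 g10 g11 g12 g13 g14.
subst Q1 Q2 W1 W2 W3 P1 P2 P3 R1 R2 R3 R4 R5 R6.
split => //.
have h1 : C1 - B1 = 0 by apply: (conv (coefE (1,0,2,1)%N E00)); rewrite /=; ring.
have h2 : D1 + A1 + C3 - B1*C1 = 0 by apply: (conv (coefE (2,0,1,2)%N E00)); rewrite /=; ring.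
have h3 : - D1 + A1 + C4 = 0 by apply: (conv (coefE (2,1,1,0)%N E00)); rewrite /=; ring.
have h4 : D2 + A2 - B1*C3 = 0 by apply: (conv (coefE (3,0,0,3)%N E00)); rewrite /=; ring.
have h5 : - D2 + A2 - B1*C4 = 0 by apply: (conv (coefE (3,1,0,1)%N E00)); rewrite /=; ring.
have h6 : A1*D1 + C2 - B2 = 0 by apply: (conv (coefE (4,0,2,0)%N E00)); rewrite /=; ring.
have h7 : A1*D2 + A2*D1 + C5 - B1*C2 - B2*C1 = 0 by apply: (conv (coefE (5,0,1,1)%N E00)); rewrite /=; ring.
have h8 : D3 + A2*D2 + A3 - B1*C5 - B2*C3 = 0 by apply: (conv (coefE (6,0,0,2)%N E00)); rewrite /=; ring.
have h9 : - D3 + A3 - B2*C4 = 0 by apply: (conv (coefE (6,1,0,0)%N E00)); rewrite /=; ring.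
have h10 : A1*D3 + A3*D1 + C6 - B2*C2 = 0 by apply: (conv (coefE (8,0,1,0)%N E00)); rewrite /=; ring.
have h11 : A2*D3 + A3*D2 - B1*C6 - B2*C5 = 0 by apply: (conv (coefE (9,0,0,1)%N E00)); rewrite /=; ring.
have h12 : A3*D3 - B2*C6 + 1 = 0 by apply: (conv (coefE (12,0,0,0)%N E00)); rewrite /=; ring.
by split; [split | split; [split|]].
Qed.
End S2.


Section S3.
Variable C : numFieldType.
Notation P := {mpoly C[4]}.

Lemma mx2_mul (a b c d a' b' c' d' : P) :
  mx2 a b c d *m mx2 a' b' c' d' =
  mx2 (a * a' + b * c') (a * b' + b * d') (c * a' + d * c') (c * b' + d * d').
Proof.
apply/matrixP => i j; rewrite !mxE !big_ord_recl big_ord0 addr0 !mxE.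
have -> : lift ord0 ord0 = 1 :> 'I_2 by apply/val_inj.
have E2 : forall k : 'I_2, k = 0 \/ k = 1.
  by case=> [[|[|k]] Hk]; [left | right | by []]; apply/val_inj.
by case: (E2 i) => ->; case: (E2 j) => ->.
Qed.

Lemma adj_mx2 (a b c d : P) : \adj (mx2 a b c d) = mx2 d (- b) (- c) a.
Proof. by rewrite adj2 /mx2 !mxE. Qed.

Variables (s t al be : C).

Definition XA : P := py C ^+ 2 - pv C + (1 / 2%:R) *: (px C * su s 2)
           + ((2%:R * t + 1) / 8%:R) *: su s 6.
Definition XB : P := - px C + py C * su s 1 + ((t + 1) / 4%:R) *: su s 4.
Definition XC : P := px C ^+ 2 + py C * px C * su s 1 + (t / 4%:R) *: (px C * su s 4)
           + ((2%:R * t + 1) / 4%:R) *: (py C * su s 5)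
           - ((9%:R * t + 5%:R) / 48%:R) *: su s 8.
Definition XD : P := py C ^+ 2 + pv C + (1 / 2%:R) *: (px C * su s 2)
           + ((2%:R * t + 1) / 8%:R) *: su s 6.

Lemma d1Xu_mx2 : d1_Xu s t = mx2 XA XB XC XD.
Proof. by []. Qed.
Lemma d0Xu_mx2 : d0_Xu s t = mx2 XD (- XB) (- XC) XA.
Proof. by rewrite /d0_Xu d1Xu_mx2 adj_mx2. Qed.

Definition yA1 := s ^+ 2 / 2%:R - be.
Definition yA2 := be * s.
Definition yA3 := (2%:R * t + 1) / 8%:R * s ^+ 6 + be * ((t + 1) / 4%:R * s ^+ 4).
Definition yD1 := s ^+ 2 / 2%:R + al.
Definition yD2 := - (al * s).
Definition yD3 := (2%:R * t + 1) / 8%:R * s ^+ 6 - al * ((t + 1) / 4%:R * s ^+ 4).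
Definition yB2 := (t + 1) / 4%:R * s ^+ 4.
Definition yC2 := t / 4%:R * s ^+ 4 - al * (s ^+ 2 / 2%:R) + be * (s ^+ 2 / 2%:R) + al * be.
Definition yC3 := be - al.
Definition yC4 := al + be.
Definition yC5 := (2%:R * t + 1) / 4%:R * s ^+ 5 - al * be * s.
Definition yC6 := - ((9%:R * t + 5%:R) / 48%:R * s ^+ 8) - al * ((2%:R * t + 1) / 8%:R * s ^+ 6)
           + be * ((2%:R * t + 1) / 8%:R * s ^+ 6) - al * be * ((t + 1) / 4%:R * s ^+ 4).

Definition Ym1 := Dm1 yA1 yA2 yA3 s yB2 s yC2 yC3 yC4 yC5 yC6 yD1 yD2 yD3.
Definition Ym0 := Dm0 yD1 yD2 yD3 (- s) (- yB2) (- s) (- yC2) (- yC3) (- yC4) (- yC5) (- yC6) yA1 yA2 yA3.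

Definition one_sp : sp C := [:: (1, (0,0,0,0)%N)].
Definition Fm (c : C) : 'M[P]_2 := mx2 (interp one_sp) (interp [::]) (interp [:: (c, (2,0,0,0)%N)]) (interp one_sp).

Ltac reify2 := rewrite ?rpu ?rpv ?rpx ?rpy; repeat progress rewrite ?rXn ?rM ?rN ?rZ ?rD.

Lemma mx2_congr (a b c d a' b' c' d' : P) : a = a' -> b = b' -> c = c' -> d = d' ->
  mx2 a b c d = mx2 a' b' c' d'.
Proof. by move=> -> -> -> ->. Qed.

Lemma allL4 (Pp : e4 -> Prop) : Pp (4,0,0,0)%N -> Pp (0,0,1,0)%N -> Pp (1,0,0,1)%N ->
  forall k, k \in L4 -> Pp k.
Proof. by move=> H1 H2 H3 k; rewrite !inE; repeat (case/orP; [by move/eqP->|]); by move/eqP->. Qed.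
Lemma allL6 (Pp : e4 -> Prop) : Pp (6,0,0,0)%N -> Pp (0,1,0,0)%N -> Pp (2,0,1,0)%N ->
  Pp (3,0,0,1)%N -> Pp (0,0,0,2)%N -> forall k, k \in L6 -> Pp k.
Proof. by move=> H1 H2 H3 H4 H5 k; rewrite !inE; repeat (case/orP; [by move/eqP->|]); by move/eqP->. Qed.
Lemma allL8 (Pp : e4 -> Prop) : Pp (8,0,0,0)%N -> Pp (2,1,0,0)%N -> Pp (4,0,1,0)%N ->
  Pp (0,0,2,0)%N -> Pp (5,0,0,1)%N -> Pp (1,0,1,1)%N -> Pp (2,0,0,2)%N -> forall k, k \in L8 -> Pp k.
Proof. by move=> H1 H2 H3 H4 H5 H6 H7 k; rewrite !inE; repeat (case/orP; [by move/eqP->|]); by move/eqP->. Qed.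

Ltac ceq K allK := apply: (interp_eqK (K := K)); [ exact: erefl | exact: erefl | apply: allK; rewrite /= /yA1 /yA2 /yA3 /yD1 /yD2 /yD3 /yB2 /yC2 /yC3 /yC4 /yC5 /yC6; ring ].

Lemma id1 : d1_Xu s t *m Fm be = Fm al *m Ym1.
Proof.
rewrite d1Xu_mx2 /Ym1 /Dm1 /Fm !mx2_mul /XA /XB /XC /XD /su.
reify2.
apply: mx2_congr.
- ceq L6 allL6.
- ceq L4 allL4.
- ceq L8 allL8.
- ceq L6 allL6.
Qed.

Lemma id0 : d0_Xu s t *m Fm al = Fm be *m Ym0.
Proof.
rewrite d0Xu_mx2 /Ym0 /Dm0 /Fm !mx2_mul /XA /XB /XC /XD /su.
reify2.
apply: mx2_congr.
- ceq L6 allL6.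
- ceq L4 allL4.
- ceq L8 allL8.
- ceq L6 allL6.
Qed.

Lemma mx2_one : mx2 1 0 0 1 = 1%:M :> 'M[P]_2.
Proof.
apply/matrixP => i j; rewrite !mxE.
have E2 : forall k : 'I_2, k = 0 \/ k = 1.
  by case=> [[|[|k]] Hk]; [left | right | by []]; apply/val_inj.
by case: (E2 i) => ->; case: (E2 j) => ->.
Qed.

Lemma interp1 (c : C) e : interp [:: (c, e)] = c *: 'X_[mk e] :> P.
Proof. by rewrite interp_cons interp_nil addr0. Qed.

Lemma FmK (c : C) : Fm (- c) *m Fm c = 1%:M.
Proof.
rewrite /Fm mx2_mul -mx2_one -!r1 !interp_nil !interp1 scaleNr.
by apply: mx2_congr; ring.
Qed.
End S3.


Section S4.
Variable C : numFieldType.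
Notation P := {mpoly C[4]}.

Lemma whomog0 q : whomog q (0 : P). Proof. by move=> m; rewrite msupp0. Qed.
Lemma whomog_eq q q' (p : P) : q = q' -> whomog q' p -> whomog q p.
Proof. by move=> ->. Qed.

Lemma mxh_block k qN qM (A B D E : 'M[P]_2) :
 (forall i j, whomog (k + qN (lshift 2 i) - qM (lshift 2 j)) (A i j)) ->
 (forall i j, whomog (k + qN (lshift 2 i) - qM (rshift 2 j)) (B i j)) ->
 (forall i j, whomog (k + qN (rshift 2 i) - qM (lshift 2 j)) (D i j)) ->
 (forall i j, whomog (k + qN (rshift 2 i) - qM (rshift 2 j)) (E i j)) ->
 mx_homog k qN qM (block_mx A B D E).
Proof.
move=> HA HB HD HE i j; rewrite -(splitK i) -(splitK j).
case: (split i) => a; case: (split j) => c;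
  by rewrite /= ?block_mxEul ?block_mxEur ?block_mxEdl ?block_mxEdr.
Qed.

Lemma mxh2 (F : 'I_2 -> 'I_2 -> rat) (a b c d : P) :
  whomog (F 0 0) a -> whomog (F 0 1) b -> whomog (F 1 0) c -> whomog (F 1 1) d ->
  forall i j, whomog (F i j) (mx2 a b c d i j).
Proof.
move=> Ha Hb Hc Hd i j; rewrite !mxE.
have E2 : forall k : 'I_2, k = 0 \/ k = 1.
  by case=> [[|[|k]] Hk]; [left | right | by []]; apply/val_inj.
by case: (E2 i) => ->; case: (E2 j) => ->.
Qed.

Lemma mxh0 (F : 'I_2 -> 'I_2 -> rat) : forall i j, whomog (F i j) ((0 : 'M[P]_2) i j).
Proof. by move=> i j; rewrite mxE; apply: whomog0. Qed.

Ltac reify2 := rewrite ?rpu ?rpv ?rpx ?rpy; repeat progress rewrite ?rXn ?rM ?rN ?rZ ?rD.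
Ltac hg n := apply: (whomog_eq (q' := n%:R / 6%:R)); [ lra | apply: homog_interp; exact: erefl ].

Lemma stage3 (qY : 'I_(2 + 2) -> rat) (s t al be : C) :
  1 + qY (lshift 2 0) - qY (rshift 2 0) = 6%:R / 6%:R ->
  1 + qY (lshift 2 0) - qY (rshift 2 1) = 4%:R / 6%:R ->
  1 + qY (lshift 2 1) - qY (rshift 2 0) = 8%:R / 6%:R ->
  1 + qY (lshift 2 1) - qY (rshift 2 1) = 6%:R / 6%:R ->
  graded_mf qY (d0_Xu s t) (d1_Xu s t) /\
  hmf_gr_iso qY (twdiff (Ym0 s t al be) (Ym1 s t al be)) qY (twdiff (d0_Xu s t) (d1_Xu s t)).
Proof.
move=> q1 q2 q3 q4.
split.
  rewrite /graded_mf /twdiff; apply: mxh_block; try exact: mxh0.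
    rewrite d1Xu_mx2 /XA /XB /XC /XD /su; reify2.
    apply: mxh2; [hg 6%N | hg 4%N | hg 8%N | hg 6%N].
  rewrite d0Xu_mx2 /XA /XB /XC /XD /su; reify2.
  apply: mxh2; [hg 6%N | hg 4%N | hg 8%N | hg 6%N].
have hF : forall c c' : C, mx_homog 0 qY qY (block_mx (Fm c) 0 0 (Fm c')).
  move=> c c'; apply: mxh_block; try exact: mxh0; rewrite /Fm.
  apply: (mxh2 (F := fun i j => 0 + qY (lshift 2 i) - qY (lshift 2 j)));
    [hg 0%N | rewrite interp_nil; exact: whomog0 | hg 2%N | hg 0%N].
  apply: (mxh2 (F := fun i j => 0 + qY (rshift 2 i) - qY (rshift 2 j)));
    [hg 0%N | rewrite interp_nil; exact: whomog0 | hg 2%N | hg 0%N].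
have hK : forall a b : C, block_mx (Fm (- a)) 0 0 (Fm (- b)) *m block_mx (Fm a) 0 0 (Fm b) = 1%:M.
  move=> a b; rewrite mulmx_block !mulmx0 !mul0mx !addr0 !add0r !FmK.
  by rewrite -scalar_mx_block.
have hK' : forall a b : C, block_mx (Fm a) 0 0 (Fm b) *m block_mx (Fm (- a)) 0 0 (Fm (- b)) = 1%:M.
  by move=> a b; rewrite -{1}(opprK a) -{1}(opprK b) hK.
have hH : forall M : 'M[P]_(2 + 2), gr_homotopic qY M qY M (1%:M) 1%:M.
  move=> M; exists 0; split; first by split; apply/matrixP => i j; rewrite !mxE.
  split; first by move=> i j; rewrite mxE; apply: whomog0.
  by rewrite mulmx0 mul0mx addr0 subrr.
have ev : forall a b : C, even_mx (block_mx (Fm a) 0 0 (Fm b)).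
  by move=> a b; split; [rewrite block_mxKur | rewrite block_mxKdl].
exists (block_mx (Fm al) 0 0 (Fm be)), (block_mx (Fm (- al)) 0 0 (Fm (- be))).
split; [|split; [|split]].
- split; first exact: ev.
  split; first exact: hF.
  by rewrite /twdiff !mulmx_block !mulmx0 !mul0mx !addr0 !add0r (id1 s t al be) (id0 s t al be).
- split; first exact: ev.
  split; first exact: hF.
  rewrite /twdiff !mulmx_block !mulmx0 !mul0mx !addr0 !add0r.
  have F1 : forall c : C, Fm c *m Fm (- c) = 1%:M by move=> c; rewrite -{1}(opprK c) FmK.
  have e1 : Ym1 s t al be *m Fm (- be) = Fm (- al) *m d1_Xu s t.
    transitivity (Fm (- al) *m (Fm al *m Ym1 s t al be) *m Fm (- be)).
      by rewrite mulmxA FmK mul1mx.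
    by rewrite -(id1 s t al be) -!mulmxA F1 mulmx1.
  have e0 : Ym0 s t al be *m Fm (- al) = Fm (- be) *m d0_Xu s t.
    transitivity (Fm (- be) *m (Fm be *m Ym0 s t al be) *m Fm (- al)).
      by rewrite mulmxA FmK mul1mx.
    by rewrite -(id0 s t al be) -!mulmxA F1 mulmx1.
  by rewrite e1 e0.
- by rewrite hK; apply: hH.
- by rewrite hK'; apply: hH.
Qed.
End S4.


Section M.
Variable C : numFieldType.
Notation P := {mpoly C[4]}.

Lemma Pb_interp' b (s : sp C) : all (fun p => (odd p.2.2 == b) || (p.1 == 0)) s -> Pb b (interp s).
Proof.
move/allP => H; apply: Pb_interp => p Hp Ho.
by have := H p Hp; rewrite (negbTE Ho) /= => /eqP.
Qed.

Lemma Pb_mx2 b (a1 a2 a3 a4 : P) : Pb b a1 -> Pb b a2 -> Pb b a3 -> Pb b a4 ->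
  forall i j, Pb b (mx2 a1 a2 a3 a4 i j).
Proof.
move=> H1 H2 H3 H4 i j; rewrite !mxE.
have E2 : forall k : 'I_2, k = 0 \/ k = 1.
  by case=> [[|[|k]] Hk]; [left | right | by []]; apply/val_inj.
by case: (E2 i) => ->; case: (E2 j) => ->.
Qed.

Theorem mainC (qY : 'I_(2 + 2) -> rat) (d0 d1 : 'M[P]_2) :
  is_mf (Wpot C - Vpot C) d0 d1 ->
  graded_mf qY d0 d1 ->
  qdim_l d0 d1 != 0 ->
  map_mx (@set_u0 C) d0 = d0_X0 C ->
  map_mx (@set_u0 C) d1 = d1_X0 C ->
  exists (s t : C) (qX : 'I_(2 + 2) -> rat),
    t ^+ 2 = 1 / 3%:R /\
    s ^+ 12 = - 576%:R * (26%:R * t - 15%:R) /\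
    graded_mf qX (d0_Xu s t) (d1_Xu s t) /\
    hmf_gr_iso qY (twdiff d0 d1) qX (twdiff (d0_Xu s t) (d1_Xu s t)).
Proof.
move=> Hmf Hg Hq Hu0 Hu1.
have [[q1 q2 q3 q4] [A1 [A2 [A3 [B1 [B2 [C1 [C2 [C3 [C4 [C5 [C6 [D1 [D2 [D3
  [P1 [P2 [P3 [Q1 [Q2 [R1 [R2 [R3 [R4 [R5 [R6 [W1 [W2 [W3 [E1 E0]]]]]]]]]]]]]]]]]]]]]]]]]]]]]] :=
  stage1 Hg Hu0 Hu1.
subst d1 d0.
have [Ed0 [[f1 f2 f3 f4 f5] [[f6 f7 f8 f9 f10] [f11 f12]]]] := stage2 Hmf.
rewrite Ed0 in Hq Hmf *.
case: (eqVneq B1 0) => HB.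
  have [hA2 hD2 hC1 hC5] := @solve0 C A1 A2 A3 B1 B2 C1 C2 C3 C4 C5 C6 D1 D2 D3 f1 f2 f3 f4 f5 f7 HB.
  subst A2 D2 C1 C5 B1.
  exfalso; move: Hq; rewrite qdimL0 ?eqxx //.
    by apply: Pb_mx2; apply: Pb_interp'; rewrite /= ?oppr0 ?eqxx ?orbT.
  by apply: Pb_mx2; apply: Pb_interp'; rewrite /= ?oppr0 ?eqxx ?orbT.
have [t [al [be [[ht hs] [[hB2 hC1] [[hA1 [hA2 hA3]] [[hD1 [hD2 hD3]] [hC2 [hC3 [hC4 [hC5 hC6]]]]]]]]]]] :=
  solve1 f1 f2 f3 f4 f5 f6 f7 f8 f9 f10 f11 f12 HB.
exists B1, t, qY.
split; first exact: ht.
split; first exact: hs.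
subst A1 A2 A3 B2 C1 C2 C3 C4 C5 C6 D1 D2 D3.
exact: (stage3 B1 t al be q1 q2 q3 q4).
Qed.
End M.

Theorem lemma2p8 (R : realType) (qY : 'I_(2 + 2) -> rat)
    (d0 d1 : 'M[{mpoly R[i][4]}]_2) :
  is_mf (Wpot R[i] - Vpot R[i]) d0 d1 ->
  graded_mf qY d0 d1 ->
  qdim_l d0 d1 != 0 -> qdim_r d0 d1 != 0 ->
  map_mx (@set_u0 R[i]) d0 = d0_X0 R[i] ->
  map_mx (@set_u0 R[i]) d1 = d1_X0 R[i] ->
  exists (s t : R[i]) (qX : 'I_(2 + 2) -> rat),
    t ^+ 2 = 1 / 3%:R /\
    s ^+ 12 = - 576%:R * (26%:R * t - 15%:R) /\
    graded_mf qX (d0_Xu s t) (d1_Xu s t) /\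
    hmf_gr_iso qY (twdiff d0 d1) qX (twdiff (d0_Xu s t) (d1_Xu s t)).
Proof.
move=> Hmf Hg Hl _ Hu0 Hu1.
exact: (@mainC R[i] qY d0 d1 Hmf Hg Hl Hu0 Hu1).
Qed.
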